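(* Let $(\mathfrak M,\mathscr A)$ be a quasi-differentiable Banach manifold (modelled on $X$) with $C^1$-kernel $\mathfrak M_0$ (modelled on $X_0$) and inner $C^1$-kernel $\mathfrak M_1$, and let $\eta\in\mathfrak M_1$. Then for any two charts $(\mathcal U,\varphi),(\mathcal V,\psi)\in\mathscr A$ with $\eta\in\mathcal U\cap\mathcal V$, $\mathcal T^0_{\eta,\varphi}(\mathfrak M)=\mathcal T^0_{\eta,\psi}(\mathfrak M)$. Consequently, for every chart $(\mathcal U,\varphi)\in\mathscr A$ with $\eta\in\mathcal U$, $\mathcal T^0_\eta(\mathfrak M)=\mathcal T^0_{\eta,\varphi}(\mathfrak M)$ and $\varphi'(\eta)\mathcal T^0_\eta(\mathfrak M)=X_0$.
   Context: Densely embedded spaces and the class $\mathfrak C^k$. For Banach spaces $X$ and $X_0$, $X_0$ is a densely embedded Banach subspace of $X$ if $X_0$ is a dense linear subspace of $X$ and there is $C>0$ with $\|x\|_X\le C\|x\|_{X_0}$ for $x\in X_0$. For such $X_0\subseteq X$, a Banach space $Y$, an open set $U_0\subseteq X_0$ and an integer $k\ge1$, $\mathfrak C^k(U_0;X,Y)$ denotes the set of maps $F:U_0\to Y$ such that (i) for each $x_0\in U_0$ there are bounded symmetric $j$-linear maps $F^{(j)}(x_0):X^j\to Y$, $1\le j\le k$, with $\|F(x)-F(x_0)-\sum_{j=1}^k\frac1{j!}F^{(j)}(x_0)(x-x_0,\dots,x-x_0)\|_Y/\|x-x_0\|_{X_0}^k\to0$ as $\|x-x_0\|_{X_0}\to0$,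 and (ii) $x\mapsto F^{(j)}(x)$ is continuous from $U_0$ (with the $X_0$-topology) into the space $L^j(X,Y)$ of bounded $j$-linear maps. We write $F'=F^{(1)}$. Embedded submanifolds and quasi-differentiable manifolds. Let $\mathfrak M,\mathfrak M_0$ be topological Banach manifolds modelled on $X$, $X_0$, let $\mathscr A$ be a family of local charts of $\mathfrak M$, and $k\ge1$. $\mathfrak M_0$ is a $C^k$-embedded Banach submanifold of $\mathfrak M$ with respect to $\mathscr A$ if: (D1) $X_0$ is a densely embedded Banach subspace of $X$; (D2) $\mathfrak M_0\subseteq\mathfrak M$ and $\mathcal U\cap\mathfrak M_0$ is open in $\mathfrak M_0$ for every open $\mathcal U\subseteq\mathfrak M$; (D3) the domains of the charts of $\mathscr A$ cover $\mathfrak M$; (D4) for $\eta\in\mathfrak M_0$ and $(\mathcal U,\varphi)\in\mathscr A$ with $\eta\in\mathcal U$, $(\mathcal U_0,\varphi|_{\mathcal U_0})$ with $\mathcal U_0:=\mathcal U\cap\mathfrak M_0$ is a local chart of $\mathfrak M_0$; (D5) for $\eta\in\mathfrak M_0$ and $(\mathcal U,\varphi),(\mathcal V,\psi)\in\mathscr A$ with $\eta\in\mathcal U\cap\mathcal V$, $\psi\circ\varphi^{-1}\in\mathfrak C^k(\varphi(\mathcal U_0\cap\mathcal V_0);X,X)$ and $\varphi\circ\psi^{-1}\in\mathfrak C^k(\psi(\mathcal U_0\cap\mathcal V_0);X,X)$. $(\mathfrak M,\mathfrak M_0,\mathscr A)$ is inward spreadable if there is a Banach manifold $\mathfrak M_1\subseteq\mathfrak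 M_0$, modelled on a Banach space $X_1$, which is a $C^1$-embedded Banach submanifold of $\mathfrak M_0$ with respect to the restrictions to $\mathfrak M_0$ of the charts of $\mathscr A$ ($\mathfrak M_1$ an inner $C^1$-kernel); outward spreadable if there is a Banach manifold $\widetilde{\mathfrak M}\supseteq\mathfrak M$ with a chart family $\widetilde{\mathscr A}$ whose restrictions to $\mathfrak M$ form $\mathscr A$ such that $\mathfrak M$ is a $C^1$-embedded Banach submanifold of $\widetilde{\mathfrak M}$. If both hold, $(\mathfrak M,\mathscr A)$ is a quasi-differentiable Banach manifold with $C^1$-kernel $\mathfrak M_0$. Tangent vectors. For $\eta\in\mathfrak M_0$, $\mathcal T_\eta(\mathfrak M)$ is the set of tangent vectors $f'(0)$ (acting on suitable real functions $F$ by $F\mapsto(F\circ f)'(0)$) of curves $f$ through $\eta$ continuously differentiable at $0$ in chart coordinates, and for a chart $\varphi\in\mathscr A$ at $\eta$, $\varphi'(\eta):\mathcal T_\eta(\mathfrak M)\to X$ is the induced linear bijection $f'(0)\mapsto(\varphi\circ\psi^{-1})'(\psi(\eta))(\psi\circ f)'(0)$. For a chart $(\mathcal U,\varphi)\in\mathscr A$ at $\eta$, $\mathcal T^0_{\eta,\varphi}(\mathfrak M)$ is the set of $f'(0)$ for curves $f:(-\varepsilon,\varepsilon)\to\mathfrak M_0$ with $f(0)=\eta$ such that $t\mapsto\varphi(f(t))$ is continuously differentiable on $(-\varepsilon,\varepsilon)$ in the norm of $X_0$; $\mathcal T^0_\eta(\mathfrak M)=\bigcup_{(\mathcal U,\varphi)}\mathcal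 T^0_{\eta,\varphi}(\mathfrak M)$ (union over charts of $\mathscr A$ at $\eta$). *)

(* Defs.v *)
(* Conventions:
   - All model Banach spaces are represented as linear subspaces S of one
     ambient normed space V, each with its own norm n : V -> R (only its values
     on S matter).  Densely embedded means S0 included in S, dense, with
     n x <= C * n0 x.
   - All manifolds are subsets M of one carrier type T, each with its own
     topology given by its family O of open sets.
   - A chart is a pair (U, phi) with phi : T -> V (only its values on U matter). *)
From HB Require Import structures.
From mathcomp Require Import all_boot all_order all_algebra.
From mathcomp Require Import all_classical all_reals all_analysis.
Import Order.TTheory GRing.Theory Num.Theory.
Set Implicit Arguments. Unset Strict Implicit. Unset Printing Implicit Defensive.
Local Open Scope classical_set_scope.
Local Open Scope ring_scope.

Section QDiff.
Context {R : realType} {V : normedModType R} {T : Type}.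

Definition banach (S : set V) (n : V -> R) : Prop :=
  [/\ [/\ S 0, (forall x y, S x -> S y -> S (x + y)) &
          (forall (a : R) x, S x -> S (a *: x))],
      [/\ (forall x, S x -> 0 <= n x /\ (n x = 0 -> x = 0)),
          (forall (a : R) x, S x -> n (a *: x) = `|a| * n x) &
          (forall x y, S x -> S y -> n (x + y) <= n x + n y)] &
      (forall u : nat -> V, (forall k, S (u k)) ->
         (forall e, 0 < e -> exists N, forall m k, (N <= m)%N -> (N <= k)%N ->
              n (u m - u k) < e) ->
         exists l, S l /\ forall e, 0 < e -> exists N, forall k, (N <= k)%N ->
              n (u k - l) < e)].

Definition dense_emb (S0 : set V) (n0 : V -> R) (S : set V) (n : V -> R) : Prop :=
  [/\ banach S0 n0, banach S n, S0 `<=` S,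
      (forall x, S x -> forall e, 0 < e -> exists y, S0 y /\ n (x - y) < e) &
      exists C, 0 < C /\ forall x, S0 x -> n x <= C * n0 x].

Definition nopen (S : set V) (n : V -> R) (A : set V) : Prop :=
  A `<=` S /\ forall x, A x -> exists e, 0 < e /\
     forall y, S y -> n (y - x) < e -> A y.

Definition topo (M : set T) (O : set (set T)) : Prop :=
  [/\ (forall U, O U -> U `<=` M), O M,
      (forall F : set (set T), F `<=` O -> O (\bigcup_(U in F) U)) &
      (forall U W, O U -> O W -> O (U `&` W))].

(* (U, phi) is a local chart of the topological manifold (M, O) modelled on
   (S, n): U open, phi a homeomorphism of U onto an open subset of S. *)
Definition chart (M : set T) (O : set (set T)) (S : set V) (n : V -> R)
  (c : set T * (T -> V)) : Prop :=
  [/\ O c.1,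
      (forall p q, c.1 p -> c.1 q -> c.2 p = c.2 q -> p = q),
      (forall p, c.1 p -> S (c.2 p)) &
      (forall W, W `<=` c.1 -> (O W <-> nopen S n (c.2 @` W)))].

Definition manifold (M : set T) (O : set (set T)) (S : set V) (n : V -> R) : Prop :=
  [/\ banach S n, topo M O &
      forall p, M p -> exists c, chart M O S n c /\ c.1 p].

(* DF is the derivative witnessing F in frak C^1(D; X, Y), where the domain D
   lies in X0 = (S0, n0), X = (SX, nX), Y = (SY, nY). *)
Definition C1wit (S0 : set V) (n0 : V -> R) (SX : set V) (nX : V -> R)
  (SY : set V) (nY : V -> R) (D : set V) (F : V -> V) (DF : V -> V -> V) : Prop :=
  [/\ (forall x, D x -> SY (F x)) /\
      (forall x, D x -> forall h, SX h -> SY (DF x h)),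
      (forall x, D x -> forall h k (a : R), SX h -> SX k ->
          DF x (h + a *: k) = DF x h + a *: DF x k),
      (forall x, D x -> exists C, forall h, SX h -> nY (DF x h) <= C * nX h),
      (forall x0, D x0 -> forall e, 0 < e -> exists d, 0 < d /\
          forall x, D x -> n0 (x - x0) < d ->
            nY (F x - F x0 - DF x0 (x - x0)) <= e * n0 (x - x0)) &
      (forall x0, D x0 -> forall e, 0 < e -> exists d, 0 < d /\
          forall x, D x -> n0 (x - x0) < d ->
            forall h, SX h -> nY (DF x h - DF x0 h) <= e * nX h)].

Definition frakC1 (S0 : set V) (n0 : V -> R) (SX : set V) (nX : V -> R)
  (SY : set V) (nY : V -> R) (D : set V) (F : V -> V) : Prop :=
  exists DF, C1wit S0 n0 SX nX SY nY D F DF.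

(* c'.2 o c.2^{-1} belongs to frak C^1(c.2(U0 & V0); X, X), U0 = c.1 & Ms,
   V0 = c'.1 & Ms, where X = (Sb, nb) and X0 = (Ss, ns). *)
Definition trans_C1 (Ms : set T) (Ss : set V) (ns : V -> R) (Sb : set V)
  (nb : V -> R) (c c' : set T * (T -> V)) : Prop :=
  exists F, (forall p, c.1 p -> c'.1 p -> Ms p -> F (c.2 p) = c'.2 p) /\
    frakC1 Ss ns Sb nb Sb nb (c.2 @` (c.1 `&` c'.1 `&` Ms)) F.

Definition embedded (Mb : set T) (Ob : set (set T)) (Sb : set V) (nb : V -> R)
  (Ab : set (set T * (T -> V)))
  (Ms : set T) (Os : set (set T)) (Ss : set V) (ns : V -> R) : Prop :=
  [/\ [/\ manifold Mb Ob Sb nb, manifold Ms Os Ss ns &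
      (forall c, Ab c -> chart Mb Ob Sb nb c)],
      dense_emb Ss ns Sb nb,
      Ms `<=` Mb /\ (forall U, Ob U -> Os (U `&` Ms)),
      (forall p, Mb p -> exists c, Ab c /\ c.1 p) /\
      (forall p c, Ms p -> Ab c -> c.1 p -> chart Ms Os Ss ns (c.1 `&` Ms, c.2)) &
      (forall p c c', Ms p -> Ab c -> Ab c' -> c.1 p -> c'.1 p ->
                  trans_C1 Ms Ss ns Sb nb c c' /\ trans_C1 Ms Ss ns Sb nb c' c)].

Definition restr_charts (A : set (set T * (T -> V))) (M0 : set T) :
  set (set T * (T -> V)) := [set (c.1 `&` M0, c.2) | c in A].

Definition deriv_on (n : V -> R) (eps : R) (g : R -> V) (d : R -> V) : Prop :=
  forall t, `|t| < eps -> forall e, 0 < e -> exists del, 0 < del /\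
    forall s, `|s| < del -> `|t + s| < eps ->
      n (g (t + s) - g t - s *: d t) <= e * `|s|.

Definition cont_at (n : V -> R) (eps : R) (d : R -> V) (t : R) : Prop :=
  forall e, 0 < e -> exists del, 0 < del /\
    forall s, `|s - t| < del -> `|s| < eps -> n (d s - d t) < e.

Definition C1_at0 (S : set V) (n : V -> R) (c : set T * (T -> V))
  (f : R -> T) (d : R -> V) : Prop :=
  exists eps, 0 < eps /\ [/\ (forall t, `|t| < eps -> c.1 (f t)),
    (forall t, `|t| < eps -> S (d t)),
    deriv_on n eps (fun t => c.2 (f t)) d & cont_at n eps d 0].

(* phi'(eta) f'(0) = v, for the chart c = (U, phi) of A at eta, computed as
   (phi o psi^{-1})'(psi eta) (psi o f)'(0) via a chart (V, psi) of A in whose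
   coordinates f is continuously differentiable at 0. *)
Definition tmap (A : set (set T * (T -> V))) (M0 : set T) (S0 : set V)
  (n0 : V -> R) (SX : set V) (nX : V -> R) (eta : T)
  (c : set T * (T -> V)) (f : R -> T) (v : V) : Prop :=
  f 0 = eta /\ exists c' d, [/\ A c', c'.1 eta, C1_at0 SX nX c' f d &
    exists F DF, [/\ (forall p, c.1 p -> c'.1 p -> M0 p -> F (c'.2 p) = c.2 p),
       C1wit S0 n0 SX nX SX nX (c'.2 @` (c.1 `&` c'.1 `&` M0)) F DF &
       v = DF (c'.2 eta) (d 0)]].

(* the tangent vector f'(0) at eta, as the class of curves with the same
   tangent vector (same image under phi'(eta) for every chart of A at eta) *)
Definition tvec (A : set (set T * (T -> V))) (M0 : set T) (S0 : set V)
  (n0 : V -> R) (SX : set V) (nX : V -> R) (eta : T) (f : R -> T) : set (R -> T) :=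
  [set g | forall c v, A c -> c.1 eta ->
     (tmap A M0 S0 n0 SX nX eta c f v <-> tmap A M0 S0 n0 SX nX eta c g v)].

Definition adm0 (M0 : set T) (S0 : set V) (n0 : V -> R) (eta : T)
  (c : set T * (T -> V)) (f : R -> T) : Prop :=
  f 0 = eta /\ exists eps d, 0 < eps /\
   [/\ (forall t, `|t| < eps -> M0 (f t) /\ c.1 (f t)),
       (forall t, `|t| < eps -> S0 (d t)),
       deriv_on n0 eps (fun t => c.2 (f t)) d &
       (forall t, `|t| < eps -> cont_at n0 eps d t)].

Definition T0c (A : set (set T * (T -> V))) (M0 : set T) (S0 : set V)
  (n0 : V -> R) (SX : set V) (nX : V -> R) (eta : T) (c : set T * (T -> V)) :
  set (set (R -> T)) :=
  [set tvec A M0 S0 n0 SX nX eta f | f in adm0 M0 S0 n0 eta c].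

Definition T0 (A : set (set T * (T -> V))) (M0 : set T) (S0 : set V)
  (n0 : V -> R) (SX : set V) (nX : V -> R) (eta : T) : set (set (R -> T)) :=
  \bigcup_(c in [set c | A c /\ c.1 eta]) T0c A M0 S0 n0 SX nX eta c.

End QDiff.

(* Main.v *)
Require Import Defs.
From HB Require Import structures.
From mathcomp Require Import all_boot all_order all_algebra.
From mathcomp Require Import all_classical all_reals all_analysis.
From mathcomp Require Import ring lra.
Import Order.TTheory GRing.Theory Num.Theory.
Local Open Scope classical_set_scope.
Local Open Scope ring_scope.

Set Implicit Arguments. Unset Strict Implicit. Unset Printing Implicit Defensive.

Section Gen.
Context {R : realType} {V : normedModType R}.
Implicit Types (S : set V) (n : V -> R).

Lemma bS0 S n : banach S n -> S 0.
Proof. by case=> [[]]. Qed.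
Lemma bSD S n : banach S n -> forall x y, S x -> S y -> S (x + y).
Proof. by case=> [[]]. Qed.
Lemma bSZ S n : banach S n -> forall (a : R) x, S x -> S (a *: x).
Proof. by case=> [[]]. Qed.
Lemma bSN S n : banach S n -> forall x, S x -> S (- x).
Proof. by move=> hb x Sx; have := bSZ hb (-1) Sx; rewrite scaleN1r. Qed.
Lemma bSB S n : banach S n -> forall x y, S x -> S y -> S (x - y).
Proof. by move=> hb x y Sx Sy; apply: (bSD hb) => //; apply: (bSN hb). Qed.
Lemma bge0 S n : banach S n -> forall x, S x -> 0 <= n x.
Proof. by case=> _ [h _ _] _ x /h []. Qed.
Lemma beq0 S n : banach S n -> forall x, S x -> n x = 0 -> x = 0.
Proof. by case=> _ [h _ _] _ x /h []. Qed.
Lemma bZ S n : banach S n -> forall (a : R) x, S x -> n (a *: x) = `|a| * n x.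
Proof. by case=> _ [_ h _] _. Qed.
Lemma btri S n : banach S n -> forall x y, S x -> S y -> n (x + y) <= n x + n y.
Proof. by case=> _ [_ _ h] _. Qed.
Lemma bn0 S n : banach S n -> n 0 = 0.
Proof.
move=> hb; have := bZ hb 0 (bS0 hb); rewrite scale0r normr0 mul0r; exact.
Qed.
Lemma bnN S n : banach S n -> forall x, S x -> n (- x) = n x.
Proof.
by move=> hb x Sx; rewrite -scaleN1r (bZ hb _ Sx) normrN normr1 mul1r.
Qed.
Lemma btriB S n : banach S n -> forall x y, S x -> S y -> n (x - y) <= n x + n y.
Proof.
move=> hb x y Sx Sy; rewrite -(bnN hb Sy); apply: (btri hb) => //; exact: bSN hb _ Sy.
Qed.

Lemma uniq_der S N (u u' : R -> V) a b d0 :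
  banach S N -> S a -> S b -> 0 < d0 ->
  (forall s, `|s| < d0 -> S (u s) /\ u s = u' s) ->
  (forall e, 0 < e -> exists d, 0 < d /\ forall s, `|s| < d -> N (u s - s *: a) <= e * `|s|) ->
  (forall e, 0 < e -> exists d, 0 < d /\ forall s, `|s| < d -> N (u' s - s *: b) <= e * `|s|) ->
  a = b.
Proof.
move=> hb Sa Sb d00 hu ha hbb.
have Sab := bSB hb Sa Sb.
apply/eqP; rewrite -subr_eq0; apply/eqP; apply: (beq0 hb Sab).
apply/eqP; rewrite eq_le (bge0 hb Sab) andbT; rewrite leNgt; apply/negP => hpos.
have e0 : 0 < N (a - b) / 4 by rewrite divr_gt0.
have [d1 [d10 h1]] := ha _ e0.
have [d2 [d20 h2]] := hbb _ e0.
pose s := Num.min d0 (Num.min d1 d2) / 2.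
have s0 : 0 < s by rewrite divr_gt0 // lt_min d00 lt_min d10 d20.
have as_ : `|s| = s by rewrite gtr0_norm.
have sle : s < Num.min d0 (Num.min d1 d2).
  rewrite /s; set m := Num.min _ _; have : 0 < m by rewrite /m lt_min d00 lt_min d10 d20.
  move=> m0; lra.
move: sle; rewrite !lt_min => /and3P [sd0 sd1 sd2].
have [Su eu] : S (u s) /\ u s = u' s by apply: hu; rewrite as_.
have Su' : S (u' s) by rewrite -eu.
have E : s *: (a - b) = (u' s - s *: b) - (u s - s *: a).
  by rewrite eu scalerBr; set x := u' s; set y := s *: a; set z := s *: b; rewrite opprB [RHS]addrC addrA subrK.
have : N (s *: (a - b)) <= N (a - b) / 4 * `|s| + N (a - b) / 4 * `|s|.
  rewrite E; apply: le_trans (btriB hb _ _) _.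
  - by apply: (bSB hb) => //; apply: (bSZ hb).
  - by apply: (bSB hb) => //; apply: (bSZ hb).
  apply: lerD; [apply: h2 | apply: h1]; by rewrite as_.
rewrite (bZ hb _ Sab) as_ => H.
have : 0 < s * N (a - b) by rewrite mulr_gt0.
move: H; set p := N (a - b); nra.
Qed.


Lemma chain (Sm : set V) (m : V -> R) SX nX SY nY (D : set V) (G : V -> V)
  (DG : V -> V -> V) (z : R -> V) z0 b d0 Cm :
  banach Sm m -> banach SX nX -> banach SY nY -> Sm `<=` SX ->
  (forall k, Sm k -> nX k <= Cm * m k) ->
  C1wit Sm m SX nX SY nY D G DG -> D z0 -> Sm z0 -> Sm b -> 0 < d0 ->
  (forall s, `|s| < d0 -> D (z s) /\ Sm (z s)) ->
  (forall e, 0 < e -> exists d, 0 < d /\ forall s, `|s| < d -> m (z s - z0 - s *: b) <= e * `|s|) ->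
  forall e, 0 < e -> exists d, 0 < d /\ forall s, `|s| < d ->
     nY (G (z s) - G z0 - s *: DG z0 b) <= e * `|s|.
Proof.
move=> hm hX hY sub emb [[SYG SYDG] lin bnd dif _] Dz0 Sz0 Sb d00 hz hder e e0.
have [C hC] := bnd _ Dz0.
pose C' := `|C| + 1.
have C'0 : 0 < C' by rewrite /C'; apply: ltr_pwDr => //.
have hC' : forall h, SX h -> nY (DG z0 h) <= C' * nX h.
  move=> h Sh; apply: le_trans (hC _ Sh) _; apply: ler_wpM2r; first exact (bge0 hX Sh).
  by rewrite /C'; apply: le_trans (ler_norm C) _; rewrite lerDl.
pose Cm' := `|Cm| + 1.
have Cm'0 : 0 < Cm' by rewrite /Cm'; apply: ltr_pwDr => //.
have emb' : forall k, Sm k -> nX k <= Cm' * m k.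
  move=> k Sk; apply: le_trans (emb _ Sk) _; apply: ler_wpM2r; first exact (bge0 hm Sk).
  by rewrite /Cm'; apply: le_trans (ler_norm Cm) _; rewrite lerDl.
pose B := 1 + m b.
have B0 : 0 < B by have := bge0 hm Sb; rewrite /B; lra.
have [d1 [d10 h1]] := hder 1 ltr01.
have e1 : 0 < e / (2 * B) by rewrite divr_gt0 // mulr_gt0.
have [dG [dG0 hG]] := dif _ Dz0 _ e1.
have e2 : 0 < e / (2 * (C' * Cm')) by rewrite divr_gt0 // !mulr_gt0.
have [d2 [d20 h2]] := hder _ e2.
exists (Num.min d0 (Num.min d1 (Num.min d2 (dG / B)))); split.
  by rewrite !lt_min d00 d10 d20 divr_gt0.
move=> s; rewrite !lt_min => /andP [sd0 /andP [sd1 /andP [sd2 sdG]]].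
have [Dzs Szs] := hz _ sd0.
have Sk1 : Sm (z s - z0) := bSB hm Szs Sz0.
have Sk : Sm (z s - z0 - s *: b) := bSB hm Sk1 (bSZ hm s Sb).
have Mle : m (z s - z0) <= B * `|s|.
  have -> : z s - z0 = (z s - z0 - s *: b) + s *: b by rewrite subrK.
  apply: le_trans (btri hm Sk (bSZ hm _ Sb)) _.
  rewrite (bZ hm _ Sb) /B mulrDl mul1r mulrC; apply: lerD => //.
  by have := h1 _ sd1; rewrite mul1r.
have Mlt : m (z s - z0) < dG.
  apply: le_lt_trans Mle _; rewrite mulrC -ltr_pdivlMr //.
have lin' : DG z0 (z s - z0) - s *: DG z0 b = DG z0 (z s - z0 - s *: b).
  by have := lin _ Dz0 _ _ (- s) (sub _ Sk1) (sub _ Sb); rewrite !scaleNr => ->.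
have E : G (z s) - G z0 - s *: DG z0 b =
   (G (z s) - G z0 - DG z0 (z s - z0)) + (DG z0 (z s - z0) - s *: DG z0 b).
  by rewrite addrA subrK.
have SY1 : SY (G (z s) - G z0 - DG z0 (z s - z0)).
  have h1' := bSB hY (SYG _ Dzs) (SYG _ Dz0).
  have h2' := bSB hY h1' (SYDG _ Dz0 _ (sub _ Sk1)). exact h2'.
have SY2 : SY (DG z0 (z s - z0 - s *: b)) by apply: SYDG => //; apply: sub.
rewrite E lin'; apply: le_trans (btri hY SY1 SY2) _.
have T1 : nY (G (z s) - G z0 - DG z0 (z s - z0)) <= e / 2 * `|s|.
  apply: le_trans (hG _ Dzs Mlt) _.
  apply: le_trans (ler_wpM2l (ltW e1) Mle) _.
  rewrite mulrA; apply: ler_wpM2r => //; rewrite le_eqVlt; apply/orP; left; apply/eqP.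
  by field; rewrite gt_eqF.
have T2 : nY (DG z0 (z s - z0 - s *: b)) <= e / 2 * `|s|.
  apply: le_trans (hC' _ (sub _ Sk)) _.
  apply: le_trans (ler_wpM2l (ltW C'0) (emb' _ Sk)) _.
  apply: le_trans (ler_wpM2l (ltW C'0) (ler_wpM2l (ltW Cm'0) (h2 _ sd2))) _.
  rewrite !mulrA; apply: ler_wpM2r => //; rewrite le_eqVlt; apply/orP; left; apply/eqP.
  by field; rewrite ?gt_eqF.
by apply: le_trans (lerD T1 T2) _; rewrite -mulrDl -splitr.
Qed.

Lemma lin_sub S0 n0 SX nX SY nY (D : set V) F DF x :
  C1wit S0 n0 SX nX SY nY D F DF -> D x -> forall h k, SX h -> SX k ->
  DF x (h - k) = DF x h - DF x k.
Proof.
case=> _ lin _ _ _ Dx h k Sh Sk.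
by have := lin _ Dx h k (-1) Sh Sk; rewrite !scaleN1r.
Qed.

Lemma bnd_pos S0 n0 SX nX SY nY (D : set V) F DF x :
  banach SX nX -> C1wit S0 n0 SX nX SY nY D F DF -> D x ->
  exists C, 0 < C /\ forall h, SX h -> nY (DF x h) <= C * nX h.
Proof.
move=> hX [_ _ bnd _ _] Dx; have [C hC] := bnd _ Dx.
exists (`|C| + 1); split; first by apply: ltr_pwDr => //.
move=> h Sh; apply: le_trans (hC _ Sh) _; apply: ler_wpM2r. exact (bge0 hX Sh).
by apply: le_trans (ler_norm C) _; rewrite lerDl.
Qed.

Lemma der_emb Sm m SX nX (u : R -> V) a C d0 :
  banach Sm m -> banach SX nX -> (forall k, Sm k -> nX k <= C * m k) -> Sm a -> 0 < d0 ->
  (forall s, `|s| < d0 -> Sm (u s)) ->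
  (forall e, 0 < e -> exists d, 0 < d /\ forall s, `|s| < d -> m (u s - s *: a) <= e * `|s|) ->
  (forall e, 0 < e -> exists d, 0 < d /\ forall s, `|s| < d -> nX (u s - s *: a) <= e * `|s|).
Proof.
move=> hm hX emb Sa d00 Su hd e e0.
pose C' := `|C| + 1.
have C'0 : 0 < C' by rewrite /C'; apply: ltr_pwDr => //.
have [d [d0' hd']] := hd (e / C') (divr_gt0 e0 C'0).
exists (Num.min d0 d); split; first by rewrite lt_min d00 d0'.
move=> s; rewrite lt_min => /andP [s0 s1].
have Sk : Sm (u s - s *: a) by apply: (bSB hm (Su _ s0) (bSZ hm s Sa)).
apply: le_trans (emb _ Sk) _.
apply: le_trans (_ : C' * m (u s - s *: a) <= _).
  apply: ler_wpM2r; first exact (bge0 hm Sk).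
  by apply: le_trans (ler_norm C) _; rewrite lerDl.
apply: le_trans (ler_wpM2l (ltW C'0) (hd' _ s1)) _.
rewrite mulrA; apply: ler_wpM2r => //.
rewrite le_eqVlt; apply/orP; left; apply/eqP; field; by rewrite gt_eqF.
Qed.

Lemma path0 (x h : V) (s : R) : x + s *: h - x - s *: h = 0.
Proof. by rewrite [x + _]addrC addrK subrr. Qed.

Lemma path_der m (x h : V) :
  m 0 = 0 -> forall e, 0 < e -> exists d, 0 < d /\ forall s, `|s| < d ->
    m (x + s *: h - x - s *: h) <= e * `|s|.
Proof.
move=> m0 e e0; exists 1; split => // s _; rewrite path0 m0.
by apply: mulr_ge0 => //; apply: ltW.
Qed.

Lemma path_in S n (P : V -> Prop) x0 h dl :
  banach S n -> S h -> 0 < dl ->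
  (forall y, S y -> n (y - x0) < dl -> P y) -> S x0 ->
  forall s, `|s| < dl / (n h + 1) -> P (x0 + s *: h).
Proof.
move=> hb Sh dl0 hP Sx0 s hs.
have nh := bge0 hb Sh.
apply: hP; first by apply: (bSD hb Sx0 (bSZ hb s Sh)).
rewrite addrC addKr (bZ hb _ Sh).
have nh1 : 0 < n h + 1 by lra.
move: hs; rewrite ltr_pdivlMr // => hs.
apply: le_lt_trans hs; rewrite ler_wpM2l //; lra.
Qed.

Lemma ext_eq S1 S0 n0 SX nX (L1 L2 : V -> V) K1 K2 :
  banach S0 n0 -> banach SX nX -> S1 `<=` S0 ->
  (forall h, S0 h -> forall e, 0 < e -> exists y, S1 y /\ n0 (h - y) < e) ->
  (forall h, S0 h -> SX (L1 h) /\ SX (L2 h)) ->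
  (forall h k, S0 h -> S0 k -> L1 (h - k) = L1 h - L1 k) ->
  (forall h k, S0 h -> S0 k -> L2 (h - k) = L2 h - L2 k) ->
  (forall h, S0 h -> nX (L1 h) <= K1 * n0 h) ->
  (forall h, S0 h -> nX (L2 h) <= K2 * n0 h) ->
  (forall h, S1 h -> L1 h = L2 h) ->
  forall h, S0 h -> L1 h = L2 h.
Proof.
move=> h0 hX sub dens SL l1 l2 b1 b2 agr h Sh.
have [SL1 SL2] := SL _ Sh.
have Sd := bSB hX SL1 SL2.
apply/eqP; rewrite -subr_eq0; apply/eqP; apply: (beq0 hX Sd).
apply/eqP; rewrite eq_le (bge0 hX Sd) andbT; rewrite leNgt; apply/negP => hpos.
pose K := `|K1| + `|K2| + 1.
have K0 : 0 < K by rewrite /K; apply: ltr_pwDr => //; apply: addr_ge0.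
set q := nX (L1 h - L2 h) in hpos.
have qK : 0 < q / 2 / K by rewrite !divr_gt0.
have [y [S1y hy]] := dens _ Sh (q / 2 / K) qK.
have S0y := sub _ S1y.
have Shy := bSB h0 Sh S0y.
have [SL1y SL2y] := SL _ Shy.
have E : L1 h - L2 h = L1 (h - y) - L2 (h - y).
  by rewrite (l1 _ _ Sh S0y) (l2 _ _ Sh S0y) (agr _ S1y) opprB addrA subrK.
have nhy := bge0 h0 Shy.
have : q <= K * n0 (h - y).
  rewrite /q E; apply: le_trans (btriB hX SL1y SL2y) _.
  apply: le_trans (lerD (b1 _ Shy) (b2 _ Shy)) _.
  rewrite -mulrDl; apply: ler_wpM2r => //.
  rewrite /K; have := ler_norm K1; have := ler_norm K2; lra.
move: hy; rewrite ltr_pdivlMr // => hy H.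
have : K * n0 (h - y) < q / 2 by rewrite mulrC.
lra.
Qed.

Lemma derivat0 n eps (g : R -> V) d :
  deriv_on n eps g d -> 0 < eps ->
  forall e, 0 < e -> exists dl, 0 < dl /\ forall s, `|s| < dl ->
     n (g s - g 0 - s *: d 0) <= e * `|s|.
Proof.
move=> hd eps0 e e0.
have h00 : `|0 : R| < eps by rewrite normr0.
have [dl [dl0 h]] := hd 0 h00 e e0.
exists (Num.min dl eps); split; first by rewrite lt_min dl0 eps0.
move=> s; rewrite lt_min => /andP [s1 s2].
by have := h s s1; rewrite add0r => /(_ s2).
Qed.

Lemma deriv_emb Sm m nX C eps (g : R -> V) d :
  banach Sm m -> (forall k, Sm k -> nX k <= C * m k) ->
  (forall t, `|t| < eps -> Sm (g t)) -> (forall t, `|t| < eps -> Sm (d t)) ->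
  deriv_on m eps g d -> deriv_on nX eps g d.
Proof.
move=> hm emb Sg Sd hd t ht e e0.
pose C' := `|C| + 1.
have C'0 : 0 < C' by rewrite /C'; apply: ltr_pwDr => //.
have [dl [dl0 h]] := hd t ht (e / C') (divr_gt0 e0 C'0).
exists dl; split => // s hs hts.
have Sk : Sm (g (t + s) - g t - s *: d t).
  exact: (bSB hm (bSB hm (Sg _ hts) (Sg _ ht)) (bSZ hm s (Sd _ ht))).
apply: le_trans (emb _ Sk) _.
apply: le_trans (_ : C' * m (g (t + s) - g t - s *: d t) <= _).
  apply: ler_wpM2r; first exact (bge0 hm Sk).
  by apply: le_trans (ler_norm C) _; rewrite lerDl.
apply: le_trans (ler_wpM2l (ltW C'0) (h _ hs hts)) _.
rewrite mulrA; apply: ler_wpM2r => //.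
rewrite le_eqVlt; apply/orP; left; apply/eqP; field; by rewrite gt_eqF.
Qed.

Lemma cont_emb Sm m nX C eps (d : R -> V) :
  banach Sm m -> (forall k, Sm k -> nX k <= C * m k) -> 0 < eps ->
  (forall t, `|t| < eps -> Sm (d t)) ->
  cont_at m eps d 0 -> cont_at nX eps d 0.
Proof.
move=> hm emb eps0 Sd hd e e0.
pose C' := `|C| + 1.
have C'0 : 0 < C' by rewrite /C'; apply: ltr_pwDr => //.
have [dl [dl0 h]] := hd (e / C') (divr_gt0 e0 C'0).
exists dl; split => // s hs hts.
have Sk : Sm (d s - d 0) by apply: (bSB hm (Sd _ hts) (Sd 0 _)); rewrite normr0.
apply: le_lt_trans (emb _ Sk) _.
apply: le_lt_trans (_ : C' * m (d s - d 0) < _).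
  apply: ler_wpM2r; first exact (bge0 hm Sk).
  by apply: le_trans (ler_norm C) _; rewrite lerDl.
rewrite -ltr_pdivlMl // mulrC; exact: h.
Qed.

Lemma path1 (x w : V) (t s : R) : x + (t + s) *: w - (x + t *: w) - s *: w = 0.
Proof. by rewrite scalerDl addrA; set X := x + t *: w; rewrite [X + _]addrC addrK subrr. Qed.

End Gen.

Section Man.
Context {R : realType} {V : normedModType R} {T : Type}.
Context (SX : set V) (nX : V -> R) (S0 : set V) (n0 : V -> R) (S1 : set V) (n1 : V -> R)
 (M : set T) (O : set (set T)) (M0 : set T) (O0 : set (set T)) (M1 : set T) (O1 : set (set T))
 (A : set (set T * (T -> V))) (eta : T)
 (HM0 : embedded M O SX nX A M0 O0 S0 n0)
 (HM1 : embedded M0 O0 S0 n0 (restr_charts A M0) M1 O1 S1 n1)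
 (Heta : M1 eta).

Lemma bX : banach SX nX.
Proof. by case: HM0 => [[[]]]. Qed.
Lemma b0 : banach S0 n0.
Proof. by case: HM0 => _ []. Qed.
Lemma b1 : banach S1 n1.
Proof. by case: HM1 => _ []. Qed.
Lemma sub0 : S0 `<=` SX.
Proof. by case: HM0 => _ []. Qed.
Lemma sub1 : S1 `<=` S0.
Proof. by case: HM1 => _ []. Qed.
Lemma emb0 : exists C, forall x, S0 x -> nX x <= C * n0 x.
Proof. by case: HM0 => _ [_ _ _ _ [C [_ h]]]; exists C. Qed.
Lemma emb1 : exists C, forall x, S1 x -> n0 x <= C * n1 x.
Proof. by case: HM1 => _ [_ _ _ _ [C [_ h]]]; exists C. Qed.
Lemma emb0P : exists C, 0 < C /\ forall x, S0 x -> nX x <= C * n0 x.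
Proof. by case: HM0 => _ [_ _ _ _ h]. Qed.
Lemma dens1 : forall h, S0 h -> forall e, 0 < e -> exists y, S1 y /\ n0 (h - y) < e.
Proof. by case: HM1 => _ []. Qed.
Lemma M1M0 : M1 `<=` M0.
Proof. by case: HM1 => _ _ []. Qed.
Lemma etaM0 : M0 eta.
Proof. exact: M1M0. Qed.
Lemma chA c : A c -> chart M O SX nX c.
Proof. by case: HM0 => [[_ _ h]] _ _ _ _; apply: h. Qed.
Lemma O0I U : O U -> O0 (U `&` M0).
Proof. by case: HM0 => _ _ [_ h] _ _; apply: h. Qed.
Lemma O1I U : O0 U -> O1 (U `&` M1).
Proof. by case: HM1 => _ _ [_ h] _ _; apply: h. Qed.
Lemma topoI U W : O U -> O W -> O (U `&` W).
Proof. move=> OU OW; have [[hM _ _] _ _ _ _] := HM0; have [_ tp _] := hM; have [_ _ _ h] := tp; exact: h OU OW. Qed.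
Lemma ch0 c p : A c -> M0 p -> c.1 p -> chart M0 O0 S0 n0 (c.1 `&` M0, c.2).
Proof. case: HM0 => _ _ _ [_ h] _ Ac Mp cp; exact (h p c Mp Ac cp). Qed.
Lemma ch1 c p : A c -> M1 p -> c.1 p -> chart M1 O1 S1 n1 ((c.1 `&` M0) `&` M1, c.2).
Proof.
case: HM1 => _ _ _ [_ h] _ Ac Mp cp.
refine (h p (c.1 `&` M0, c.2) Mp _ _); first by exists c.
by split => //; apply: M1M0.
Qed.

Definition TW (a b : set T * (T -> V)) F DF :=
  (forall p, a.1 p -> b.1 p -> M0 p -> F (a.2 p) = b.2 p) /\
  C1wit S0 n0 SX nX SX nX (a.2 @` (a.1 `&` b.1 `&` M0)) F DF.
Definition TW1 (a b : set T * (T -> V)) F DF :=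
  (forall p, (a.1 `&` M0) p -> (b.1 `&` M0) p -> M1 p -> F (a.2 p) = b.2 p) /\
  C1wit S1 n1 S0 n0 S0 n0 (a.2 @` ((a.1 `&` M0) `&` (b.1 `&` M0) `&` M1)) F DF.

Lemma tr0 a b : A a -> A b -> a.1 eta -> b.1 eta -> exists F DF, TW a b F DF.
Proof.
case: HM0 => _ _ _ _ h Aa Ab ae be.
have [[F [hF [DF hDF]]] _] := h eta a b etaM0 Aa Ab ae be.
by exists F, DF.
Qed.
Lemma tr1 a b : A a -> A b -> a.1 eta -> b.1 eta -> exists F DF, TW1 a b F DF.
Proof.
case: HM1 => _ _ _ _ h Aa Ab ae be.
have [[F [hF [DF hDF]]] _] := h eta (a.1 `&` M0, a.2) (b.1 `&` M0, b.2) Heta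
  (ex_intro2 _ _ a Aa erefl) (ex_intro2 _ _ b Ab erefl) (conj ae etaM0) (conj be etaM0).
by exists F, DF.
Qed.

Lemma val0 c p : A c -> M0 p -> c.1 p -> S0 (c.2 p).
Proof. by move=> Ac Mp cp; case: (ch0 Ac Mp cp) => _ _ h _; apply: h. Qed.
Lemma val1 c p : A c -> M1 p -> c.1 p -> S1 (c.2 p).
Proof.
move=> Ac Mp cp; case: (ch1 Ac Mp cp) => _ _ h _; apply: h.
by split => //; split => //; apply: M1M0.
Qed.
Lemma valX c p : A c -> c.1 p -> SX (c.2 p).
Proof. by move=> Ac cp; case: (chA Ac) => _ _ h _; apply: h. Qed.

Lemma open1 a b e : A a -> A b -> A e -> a.1 eta -> b.1 eta -> e.1 eta ->
  exists dl, 0 < dl /\ forall y, S1 y -> n1 (y - a.2 eta) < dl ->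
    (a.2 @` ((a.1 `&` b.1 `&` e.1) `&` M0 `&` M1)) y.
Proof.
move=> Aa Ab Ae ae be ee.
have [Oa _ _ _] := chA Aa. have [Ob _ _ _] := chA Ab. have [Oe _ _ _] := chA Ae.
have [_ _ _ h] := ch1 Aa Heta ae.
have W1 : ((a.1 `&` b.1 `&` e.1) `&` M0 `&` M1) `<=` (a.1 `&` M0 `&` M1).
  by move=> p [[[[ap bp] ep] mp] m1p].
have OW : O1 ((a.1 `&` b.1 `&` e.1) `&` M0 `&` M1).
  by apply: O1I; apply: O0I; apply: topoI => //; apply: topoI.
have [_ hn] := (h _ W1).1 OW.
have [dl [dl0 hdl]] := hn (a.2 eta) (ex_intro2 _ _ eta (conj (conj (conj (conj ae be) ee) etaM0) Heta) erefl).
by exists dl; split.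
Qed.

Lemma open0 b : A b -> b.1 eta ->
  exists dl, 0 < dl /\ forall y, S0 y -> n0 (y - b.2 eta) < dl ->
    (b.2 @` (b.1 `&` M0)) y.
Proof.
move=> Ab be.
have [Ob _ _ _] := chA Ab.
have [_ _ _ h] := ch0 Ab etaM0 be.
have [_ hn] := (h _ (@subset_refl _ (b.1 `&` M0))).1 (O0I Ob).
have [dl [dl0 hdl]] := hn (b.2 eta) (ex_intro2 _ _ eta (conj be etaM0) erefl).
by exists dl; split.
Qed.

Lemma agree a b F DF F1 DF1 : A a -> A b -> a.1 eta -> b.1 eta ->
  TW a b F DF -> TW1 a b F1 DF1 -> forall h, S1 h -> DF (a.2 eta) h = DF1 (a.2 eta) h.
Proof.
move=> Aa Ab ae be [eF cF] [eF1 cF1] h Sh.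
set x0 := a.2 eta.
have [C1 hC1] := emb1. have [C0 hC0] := emb0.
have [dl [dl0 hdl]] := open1 Aa Ab Ab ae be be.
have Sx0 : S1 x0 := val1 Aa Heta ae.
have Sh0 := sub1 Sh.
have dl'0 : 0 < dl / (n1 h + 1) by rewrite divr_gt0 //; have := bge0 b1 Sh; lra.
have pt := path_in b1 Sh dl0 hdl Sx0.
have Dx1 : (a.2 @` ((a.1 `&` M0) `&` (b.1 `&` M0) `&` M1)) x0.
  by exists eta; first exact: (conj (conj (conj ae etaM0) (conj be etaM0)) Heta).
have Dx0 : (a.2 @` (a.1 `&` b.1 `&` M0)) x0.
  by exists eta; first exact: (conj (conj ae be) etaM0).
have hz1 : forall s, `|s| < dl / (n1 h + 1) ->
   (a.2 @` ((a.1 `&` M0) `&` (b.1 `&` M0) `&` M1)) (x0 + s *: h) /\ S1 (x0 + s *: h).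
  move=> s hs; have [p [[[[ap bp] _] mp] m1p] ep] := pt s hs.
  split; first by exists p; first exact: (conj (conj (conj ap mp) (conj bp mp)) m1p).
  exact: (bSD b1 Sx0 (bSZ b1 s Sh)).
have hz0 : forall s, `|s| < dl / (n1 h + 1) ->
   (a.2 @` (a.1 `&` b.1 `&` M0)) (x0 + s *: h) /\ S0 (x0 + s *: h).
  move=> s hs; have [p [[[[ap bp] _] mp] m1p] ep] := pt s hs.
  split; first by exists p; first exact: (conj (conj ap bp) mp).
  exact: (sub1 (bSD b1 Sx0 (bSZ b1 s Sh))).
have c1 := chain (z := fun s => x0 + s *: h) b1 b0 b0 sub1 hC1 cF1 Dx1 Sx0 Sh dl'0 hz1
  (path_der x0 h (bn0 b1)).
have [[SF1 SDF1] _ _ _ _] := cF1.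
have [[SF SDF] _ _ _ _] := cF.
have Su1 : forall s, `|s| < dl / (n1 h + 1) -> S0 (F1 (x0 + s *: h) - F1 x0).
  move=> s hs; exact: (bSB b0 (SF1 _ (hz1 s hs).1) (SF1 _ Dx1)).
have c1X := der_emb (u := fun s => F1 (x0 + s *: h) - F1 x0) b0 bX hC0 (SDF1 _ Dx1 _ Sh0) dl'0
  Su1 c1.
have c0 := chain (z := fun s => x0 + s *: h) b0 bX bX sub0 hC0 cF Dx0 (sub1 Sx0) Sh0 dl'0 hz0
  (path_der x0 h (bn0 b0)).
apply: (uniq_der (u := fun s => F (x0 + s *: h) - F x0)
   (u' := fun s => F1 (x0 + s *: h) - F1 x0) bX (SDF _ Dx0 _ (sub0 Sh0))
   (sub0 (SDF1 _ Dx1 _ Sh0)) dl'0 _ c0 c1X).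
move=> s hs; have [p [[[[ap bp] _] mp] m1p] ep] := pt s hs.
rewrite /= -ep (eF _ ap bp mp) (eF1 _ (conj ap mp) (conj bp mp) m1p).
rewrite /x0 (eF _ ae be etaM0) (eF1 _ (conj ae etaM0) (conj be etaM0) Heta).
split => //; exact: (bSB bX (valX Ab bp) (valX Ab be)).
Qed.

Lemma compo a b e G DG F' DF' F DF : A a -> A b -> A e -> a.1 eta -> b.1 eta -> e.1 eta ->
  TW a b G DG -> TW b e F' DF' -> TW a e F DF ->
  forall h, S0 h -> DF (a.2 eta) h = DF' (b.2 eta) (DG (a.2 eta) h).
Proof.
move=> Aa Ab Ae ae be ee TWG [eF' cF'] [eF cF].
have [eG cG] := TWG.
set x0 := a.2 eta.
have [C1 hC1] := emb1. have [C0 [C00 hC0]] := emb0P.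
have Sx0 : S1 x0 := val1 Aa Heta ae.
have Dx0 : (a.2 @` (a.1 `&` e.1 `&` M0)) x0.
  by exists eta; first exact: (conj (conj ae ee) etaM0).
have Dxg : (a.2 @` (a.1 `&` b.1 `&` M0)) x0.
  by exists eta; first exact: (conj (conj ae be) etaM0).
have Dy : (b.2 @` (b.1 `&` e.1 `&` M0)) (b.2 eta).
  by exists eta; first exact: (conj (conj be ee) etaM0).
have [[SF SDF] _ _ _ _] := cF.
have [[SF' SDF'] _ _ _ _] := cF'.
have [[SG SDG] _ _ _ _] := cG.
have key1 : forall h, S1 h -> DF x0 h = DF' (b.2 eta) (DG x0 h).
  move=> h Sh.
  have Sh0 := sub1 Sh.
  have [G1 [DG1 TWG1]] := tr1 Aa Ab ae be.
  rewrite (agree Aa Ab ae be TWG TWG1 Sh).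
  have [eG1 cG1] := TWG1.
  have [[SG1 SDG1] _ _ _ _] := cG1.
  have [dl [dl0 hdl]] := open1 Aa Ab Ae ae be ee.
  have dl'0 : 0 < dl / (n1 h + 1) by rewrite divr_gt0 //; have := bge0 b1 Sh; lra.
  have pt := path_in b1 Sh dl0 hdl Sx0.
  have Dx1 : (a.2 @` ((a.1 `&` M0) `&` (b.1 `&` M0) `&` M1)) x0.
    by exists eta; first exact: (conj (conj (conj ae etaM0) (conj be etaM0)) Heta).
  have hz1 : forall s, `|s| < dl / (n1 h + 1) ->
     (a.2 @` ((a.1 `&` M0) `&` (b.1 `&` M0) `&` M1)) (x0 + s *: h) /\ S1 (x0 + s *: h).
    move=> s hs; have [p [[[[ap bp] _] mp] m1p] ep] := pt s hs.
    split; first by exists p; first exact: (conj (conj (conj ap mp) (conj bp mp)) m1p).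
    exact: (bSD b1 Sx0 (bSZ b1 s Sh)).
  have hz0 : forall s, `|s| < dl / (n1 h + 1) ->
     (a.2 @` (a.1 `&` e.1 `&` M0)) (x0 + s *: h) /\ S0 (x0 + s *: h).
    move=> s hs; have [p [[[[ap bp] ep'] mp] m1p] ep] := pt s hs.
    split; first by exists p; first exact: (conj (conj ap ep') mp).
    exact: (sub1 (bSD b1 Sx0 (bSZ b1 s Sh))).
  have eG1x : G1 x0 = b.2 eta by rewrite /x0 (eG1 _ (conj ae etaM0) (conj be etaM0) Heta).
  have Dy1 : (b.2 @` (b.1 `&` e.1 `&` M0)) (G1 x0) by rewrite eG1x.
  have hzw : forall s, `|s| < dl / (n1 h + 1) ->
     (b.2 @` (b.1 `&` e.1 `&` M0)) (G1 (x0 + s *: h)) /\ S0 (G1 (x0 + s *: h)).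
    move=> s hs; have [p [[[[ap bp] ep'] mp] m1p] ep] := pt s hs.
    rewrite -ep (eG1 _ (conj ap mp) (conj bp mp) m1p).
    split; first by exists p; first exact: (conj (conj bp ep') mp).
    exact: (val0 Ab mp bp).
  have c1 := chain (z := fun s => x0 + s *: h) b1 b0 b0 sub1 hC1 cG1 Dx1 Sx0 Sh dl'0 hz1
    (path_der x0 h (bn0 b1)).
  have cw := chain (z := fun s => G1 (x0 + s *: h)) b0 bX bX sub0 hC0 cF' Dy1 (SG1 _ Dx1)
    (SDG1 _ Dx1 _ Sh0) dl'0 hzw c1.
  have c0 := chain (z := fun s => x0 + s *: h) b0 bX bX sub0 hC0 cF Dx0 (sub1 Sx0) Sh0 dl'0 hz0
    (path_der x0 h (bn0 b0)).
  rewrite -eG1x.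
  apply: (uniq_der (u := fun s => F (x0 + s *: h) - F x0)
     (u' := fun s => F' (G1 (x0 + s *: h)) - F' (G1 x0)) bX (SDF _ Dx0 _ (sub0 Sh0))
     (SDF' _ Dy1 _ (sub0 (SDG1 _ Dx1 _ Sh0))) dl'0 _ c0 cw).
  move=> s hs; have [p [[[[ap bp] ep'] mp] m1p] ep] := pt s hs.
  rewrite /= -ep (eG1 _ (conj ap mp) (conj bp mp) m1p) (eF _ ap ep' mp) (eF' _ bp ep' mp).
  rewrite eG1x /x0 (eF _ ae ee etaM0) (eF' _ be ee etaM0).
  split => //; exact: (bSB bX (valX Ae ep') (valX Ae ee)).
have [K1 [K10 hK1]] := bnd_pos bX cF Dx0.
have [K2 [K20 hK2]] := bnd_pos bX cF' Dy.
have [K3 [K30 hK3]] := bnd_pos bX cG Dxg.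
apply: (ext_eq (K1 := K1 * C0) (K2 := K2 * (K3 * C0)) b0 bX sub1 dens1 _ _ _ _ _ key1).
- move=> h Sh; split; first exact: SDF _ Dx0 _ (sub0 Sh).
  exact: SDF' _ Dy _ (SDG _ Dxg _ (sub0 Sh)).
- by move=> h k Sh Sk; rewrite (lin_sub cF Dx0 (sub0 Sh) (sub0 Sk)).
- move=> h k Sh Sk; rewrite (lin_sub cG Dxg (sub0 Sh) (sub0 Sk)).
  by rewrite (lin_sub cF' Dy (SDG _ Dxg _ (sub0 Sh)) (SDG _ Dxg _ (sub0 Sk))).
- move=> h Sh; apply: le_trans (hK1 _ (sub0 Sh)) _.
  by rewrite -mulrA; apply: ler_wpM2l; [apply: ltW | apply: hC0].
- move=> h Sh; apply: le_trans (hK2 _ (SDG _ Dxg _ (sub0 Sh))) _.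
  rewrite -mulrA; apply: ler_wpM2l; first exact: ltW.
  apply: le_trans (hK3 _ (sub0 Sh)) _.
  by rewrite -mulrA; apply: ler_wpM2l; [apply: ltW | apply: hC0].
Qed.

Lemma pres a e F DF : A a -> A e -> a.1 eta -> e.1 eta -> TW a e F DF ->
  forall h, S0 h -> S0 (DF (a.2 eta) h).
Proof.
move=> Aa Ae ae ee TWF h Sh.
have [F1 [DF1 TWF1]] := tr1 Aa Ae ae ee.
have [_ cF] := TWF. have [_ cF1] := TWF1.
have [C0 [C00 hC0]] := emb0P.
have Dx0 : (a.2 @` (a.1 `&` e.1 `&` M0)) (a.2 eta).
  by exists eta; first exact: (conj (conj ae ee) etaM0).
have Dx1 : (a.2 @` ((a.1 `&` M0) `&` (e.1 `&` M0) `&` M1)) (a.2 eta).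
  by exists eta; first exact: (conj (conj (conj ae etaM0) (conj ee etaM0)) Heta).
have [[SF SDF] _ _ _ _] := cF.
have [[SF1 SDF1] _ _ _ _] := cF1.
have [K1 [K10 hK1]] := bnd_pos bX cF Dx0.
have [K2 [K20 hK2]] := bnd_pos b0 cF1 Dx1.
suff -> : DF (a.2 eta) h = DF1 (a.2 eta) h by apply: SDF1.
apply: (ext_eq (K1 := K1 * C0) (K2 := C0 * K2) b0 bX sub1 dens1 _ _ _ _ _
  (agree Aa Ae ae ee TWF TWF1)) => //.
- move=> k Sk; split; first exact: SDF _ Dx0 _ (sub0 Sk).
  exact: sub0 (SDF1 _ Dx1 _ Sk).
- by move=> k l Sk Sl; rewrite (lin_sub cF Dx0 (sub0 Sk) (sub0 Sl)).
- by move=> k l Sk Sl; rewrite (lin_sub cF1 Dx1 Sk Sl).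
- move=> k Sk; apply: le_trans (hK1 _ (sub0 Sk)) _.
  by rewrite -mulrA; apply: ler_wpM2l; [apply: ltW | apply: hC0].
- move=> k Sk; apply: le_trans (hC0 _ (SDF1 _ Dx1 _ Sk)) _.
  by rewrite -mulrA; apply: ler_wpM2l; [apply: ltW | apply: hK2].
Qed.

Lemma TWid c : A c -> c.1 eta -> TW c c (fun x => x) (fun _ h => h).
Proof.
move=> Ac ce; split => //.
have DS : forall x, (c.2 @` (c.1 `&` c.1 `&` M0)) x -> S0 x.
  by move=> x [p [[cp _] mp] <-]; exact: val0 Ac mp cp.
split.
- split; last by [].
  by move=> x Dx; apply: sub0; apply: DS.
- by [].
- by move=> x _; exists 1 => h _; rewrite mul1r.
- move=> x0 Dx0 e e0; exists 1; split => // x Dx _.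
  rewrite subrr (bn0 bX); apply: mulr_ge0; first exact: ltW.
  exact (bge0 b0 (bSB b0 (DS _ Dx) (DS _ Dx0))).
- move=> x0 Dx0 e e0; exists 1; split => // x Dx _ h Sh.
  rewrite subrr (bn0 bX); apply: mulr_ge0; first exact: ltW.
  exact (bge0 bX Sh).
Qed.

Lemma charT a e F DF f eps d : f 0 = eta -> 0 < eps ->
  [/\ (forall t, `|t| < eps -> M0 (f t) /\ a.1 (f t)),
      (forall t, `|t| < eps -> S0 (d t)),
      deriv_on n0 eps (fun t => a.2 (f t)) d &
      (forall t, `|t| < eps -> cont_at n0 eps d t)] ->
  A a -> A e -> a.1 eta -> e.1 eta -> TW a e F DF ->
  forall v, tmap A M0 S0 n0 SX nX eta e f v <-> v = DF (a.2 eta) (d 0).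
Proof.
move=> hf0 eps0 [fM Sd hd hc] Aa Ae ae ee [eF cF] v.
have [C0 [C00 hC0]] := emb0P.
have e00 : `|0 : R| < eps by rewrite normr0.
have Sd0 := Sd 0 e00.
have Sx0 : S0 (a.2 eta) := val0 Aa etaM0 ae.
split.
- case=> _ [c' [d' [Ac' c'e [eps' [eps'0 [fc' Sd' hd' hc']]] [F'' [DF'' [eF'' cF'' ->]]]]]].
  have TWF'' : TW c' e F'' DF''.
    split; first by move=> p cp ep mp; exact: eF'' p ep cp mp.
    by rewrite [c'.1 `&` e.1]setIC.
  have [G [DG TWG]] := tr0 Aa Ac' ae c'e.
  have [eG cG] := TWG.
  have [[SG SDG] _ _ _ _] := cG.
  have Dx0 : (a.2 @` (a.1 `&` c'.1 `&` M0)) (a.2 eta).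
    by exists eta; first exact: (conj (conj ae c'e) etaM0).
  have dl0 : 0 < Num.min eps eps' by rewrite lt_min eps0 eps'0.
  have hz : forall s, `|s| < Num.min eps eps' ->
     (a.2 @` (a.1 `&` c'.1 `&` M0)) (a.2 (f s)) /\ S0 (a.2 (f s)).
    move=> s; rewrite lt_min => /andP [s1 s2]; have [mf af] := fM s s1.
    split; first by exists (f s); first exact: (conj (conj af (fc' s s2)) mf).
    exact: val0 Aa mf af.
  have hder := derivat0 hd eps0; rewrite /= hf0 in hder.
  have c0 := chain (z := fun s => a.2 (f s)) b0 bX bX sub0 hC0 cG Dx0 Sx0 Sd0 dl0 hz hder.
  have c1 := derivat0 hd' eps'0; rewrite /= hf0 in c1.
  have e0' : `|0 : R| < eps' by rewrite normr0.
  have step1 : d' 0 = DG (a.2 eta) (d 0).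
    apply: (uniq_der (u := fun s => c'.2 (f s) - c'.2 eta)
       (u' := fun s => G (a.2 (f s)) - G (a.2 eta)) bX (Sd' 0 e0')
       (SDG _ Dx0 _ (sub0 Sd0)) dl0 _ c1 c0).
    move=> s; rewrite lt_min => /andP [s1 s2]; have [mf af] := fM s s1.
    rewrite /= (eG _ af (fc' s s2) mf) (eG _ ae c'e etaM0); split => //.
    exact: (bSB bX (valX Ac' (fc' s s2)) (valX Ac' c'e)).
  rewrite step1; symmetry.
  exact: (compo Aa Ac' Ae ae c'e ee TWG TWF'' (conj eF cF) Sd0).
- move=> ->; split => //; exists a, d; split => //.
  + exists eps; split => //; split.
    * by move=> t ht; case: (fM t ht).
    * by move=> t ht; apply: sub0; apply: Sd.
    * apply: (deriv_emb (Sm := S0) (m := n0) (C := C0)) => //; first exact: b0.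
      by move=> t ht; case: (fM t ht) => mf af; exact: val0 Aa mf af.
    * by apply: (cont_emb (Sm := S0) (m := n0) (C := C0) b0) => //; apply: hc.
  + exists F, DF; split => //.
    * by move=> p ep ap mp; exact: eF p ap ep mp.
    * by rewrite [e.1 `&` a.1]setIC.
Qed.

Lemma line b w : A b -> b.1 eta -> S0 w -> exists g eps, g 0 = eta /\ 0 < eps /\
  [/\ (forall t, `|t| < eps -> M0 (g t) /\ b.1 (g t)),
      (forall t, `|t| < eps -> S0 ((fun _ : R => w) t)),
      deriv_on n0 eps (fun t => b.2 (g t)) (fun _ => w) &
      (forall t, `|t| < eps -> cont_at n0 eps (fun _ => w) t)].
Proof.
move=> Ab be Sw.
have [dl [dl0 hdl]] := open0 Ab be.
have pt := path_in b0 Sw dl0 hdl (val0 Ab etaM0 be).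
pose P t p := (b.1 `&` M0) p /\ b.2 p = b.2 eta + t *: w.
pose g t := match pselect (exists p, P t p) with
  | left H => proj1_sig (cid H) | right _ => eta end.
have gP : forall t, (exists p, P t p) -> P t (g t).
  move=> t H; rewrite /g; case: (pselect _) => // H'; exact: (proj2_sig (cid H')).
have gP' : forall t, `|t| < dl / (n0 w + 1) -> P t (g t).
  move=> t ht; apply: gP; have [p hp ep] := pt t ht; by exists p.
have [inj _] : (forall p q, b.1 p -> b.1 q -> b.2 p = b.2 q -> p = q) /\ True.
  by have [_ i _ _] := chA Ab.
have dl'0 : 0 < dl / (n0 w + 1) by rewrite divr_gt0 //; have := bge0 b0 Sw; lra.
exists g, (dl / (n0 w + 1)); split.
  have h00 : `|0 : R| < dl / (n0 w + 1) by rewrite normr0.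
  have [[bg _] eg] := gP' 0 h00.
  by apply: inj => //; rewrite eg scale0r addr0.
split => //; split.
- by move=> t ht; have [[bg mg] _] := gP' t ht.
- by [].
- move=> t ht e e0; exists 1; split => // s _ hts.
  rewrite (gP' _ hts).2 (gP' _ ht).2 path1 (bn0 b0).
  by apply: mulr_ge0 => //; apply: ltW.
- by move=> t _ e e0; exists 1; split => // s _ _; rewrite subrr (bn0 b0).
Qed.

Lemma tvec_refl f : tvec A M0 S0 n0 SX nX eta f f.
Proof. by move=> c v _ _. Qed.

Lemma incl c c' : A c -> A c' -> c.1 eta -> c'.1 eta ->
  T0c A M0 S0 n0 SX nX eta c `<=` T0c A M0 S0 n0 SX nX eta c'.
Proof.
move=> Ac Ac' ce c'e x [f [hf0 [eps [d [eps0 Hf]]]]] <-.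
have Hf' := Hf; case: Hf' => fM Sd _ _.
have e00 : `|0 : R| < eps by rewrite normr0.
have [F [DF TWF]] := tr0 Ac Ac' ce c'e.
have Sw := pres Ac Ac' ce c'e TWF (Sd 0 e00).
have [g [epsg [g0 [epsg0 Hg]]]] := line Ac' c'e Sw.
exists g; first by split => //; exists epsg, (fun _ => DF (c.2 eta) (d 0)).
have EQ : forall e v, A e -> e.1 eta ->
    (tmap A M0 S0 n0 SX nX eta e g v <-> tmap A M0 S0 n0 SX nX eta e f v).
  move=> e v Ae ee.
  have [Fe [DFe TWe]] := tr0 Ac Ae ce ee.
  have [Fe' [DFe' TWe']] := tr0 Ac' Ae c'e ee.
  rewrite (charT g0 epsg0 Hg Ac' Ae c'e ee TWe') (charT hf0 eps0 Hf Ac Ae ce ee TWe).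
  by rewrite (compo Ac Ac' Ae ce c'e ee TWF TWe' TWe (Sd 0 e00)).
apply/seteqP; split => k /= H e v Ae ee.
- by rewrite -(H e v Ae ee) EQ.
- by rewrite -(H e v Ae ee) EQ.
Qed.

Lemma part1 c c' : A c -> A c' -> c.1 eta -> c'.1 eta ->
  T0c A M0 S0 n0 SX nX eta c = T0c A M0 S0 n0 SX nX eta c'.
Proof.
by move=> Ac Ac' ce c'e; apply/seteqP; split; apply: incl.
Qed.

Lemma part2 c : A c -> c.1 eta ->
  T0 A M0 S0 n0 SX nX eta = T0c A M0 S0 n0 SX nX eta c /\
  [set v | exists f, T0 A M0 S0 n0 SX nX eta (tvec A M0 S0 n0 SX nX eta f) /\
                     tmap A M0 S0 n0 SX nX eta c f v] = S0.
Proof.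
move=> Ac ce; split.
  apply/seteqP; split.
  - by move=> x [c0 [Ac0 c0e] Hx]; rewrite -(part1 Ac0 Ac c0e ce).
  - by move=> x Hx; exists c.
apply/seteqP; split.
- move=> v [f [[c0 [Ac0 c0e] [f0 hadm Ef0]] hv]].
  have f0in := tvec_refl f0; rewrite Ef0 in f0in.
  have := (f0in c v Ac ce).1 hv.
  case: hadm => hf0 [eps [d [eps0 Hf]]].
  have Hf' := Hf; case: Hf' => _ Sd _ _.
  have e00 : `|0 : R| < eps by rewrite normr0.
  have [F [DF TWF]] := tr0 Ac0 Ac c0e ce.
  rewrite (charT hf0 eps0 Hf Ac0 Ac c0e ce TWF) => ->.
  exact (pres Ac0 Ac c0e ce TWF (Sd 0 e00)).
- move=> v Sv.
  have [g [epsg [g0 [epsg0 Hg]]]] := line Ac ce Sv.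
  exists g; split.
    exists c => //; exists g => //; split => //; by exists epsg, (fun _ => v).
  by apply/(charT g0 epsg0 Hg Ac Ac ce ce (TWid Ac ce)).
Qed.

End Man.

Unset Implicit Arguments.

Theorem lemma3p7 (R : realType) (V : normedModType R) (T : Type)
  (St : set V) (nt : V -> R) (SX : set V) (nX : V -> R)
  (S0 : set V) (n0 : V -> R) (S1 : set V) (n1 : V -> R)
  (Mt : set T) (Ot : set (set T)) (M : set T) (O : set (set T))
  (M0 : set T) (O0 : set (set T)) (M1 : set T) (O1 : set (set T))
  (At A : set (set T * (T -> V))) (eta : T)
  (* M0 is a C^1-embedded Banach submanifold of M w.r.t. A *)
  (HM0 : embedded M O SX nX A M0 O0 S0 n0)
  (* inward spreadable, with inner C^1-kernel M1 *)
  (HM1 : embedded M0 O0 S0 n0 (restr_charts A M0) M1 O1 S1 n1)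
  (* outward spreadable *)
  (HMt : embedded Mt Ot St nt At M O SX nX)
  (HA : A = restr_charts At M)
  (Heta : M1 eta) :
  (forall c c', A c -> A c' -> c.1 eta -> c'.1 eta ->
     T0c A M0 S0 n0 SX nX eta c = T0c A M0 S0 n0 SX nX eta c') /\
  (forall c, A c -> c.1 eta ->
     T0 A M0 S0 n0 SX nX eta = T0c A M0 S0 n0 SX nX eta c /\
     [set v | exists f, T0 A M0 S0 n0 SX nX eta (tvec A M0 S0 n0 SX nX eta f) /\
                        tmap A M0 S0 n0 SX nX eta c f v] = S0).

Proof.
split.
- move=> c c' Ac Ac' ce c'e; exact (part1 HM0 HM1 Heta Ac Ac' ce c'e).
- move=> c Ac ce; exact (part2 HM0 HM1 Heta Ac ce).
Qed.
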